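(* Let $\sigma$ be a 2-structure and $X\subsetneq V(\sigma)$ with $\sigma[X]$ prime; write $\overline{X}=V(\sigma)\setminus X$. Suppose Statement (S5) holds (there is no $Y\subseteq\overline{X}$ with $|Y|=5$ and $\sigma[X\cup Y]$ prime). Then for each connected component $C$ of the outside graph $\Gamma_{(\sigma,\overline{X})}$, $P_5\not\leq C$.
   Context: A 2-structure $\sigma$ consists of a vertex set $V(\sigma)$ and an equivalence relation $\equiv_\sigma$ on ordered pairs of distinct vertices; $\sigma[W]$ is the induced 2-structure on $W$. A module is a set $M$ such that for all $x,y\in M$ and $v\notin M$, $(x,v)\equiv_\sigma(y,v)$ and $(v,x)\equiv_\sigma(v,y)$; $\sigma$ is prime if $|V(\sigma)|\geq3$ and its only modules are $\emptyset$, $V(\sigma)$ and singletons. The outside graph $\Gamma_{(\sigma,\overline{X})}$ has vertex set $\overline{X}$ and edges the 2-element sets $Y\subseteq\overline{X}$ with $\sigma[X\cup Y]$ prime. $P_5$ is the path on 5 vertices; $G\leq H$ means $G$ is isomorphic to an induced subgraph of $H$. *)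

(* Defs.v *)
From Stdlib Require Import Relations Arith.

(* A 2-structure: vertex set and an equivalence relation on ordered pairs of
   distinct vertices; [eqv x y u v] means (x,y) ≡ (u,v). *)
Record two_structure := {
  vtx : Type;
  eqv : vtx -> vtx -> vtx -> vtx -> Prop;
  eqv_refl : forall x y, x <> y -> eqv x y x y;
  eqv_sym : forall x y u v, x <> y -> u <> v -> eqv x y u v -> eqv u v x y;
  eqv_trans : forall x y u v a b, x <> y -> u <> v -> a <> b ->
      eqv x y u v -> eqv u v a b -> eqv x y a b
}.

Section TwoStruct.
Variable s : two_structure.
Notation V := (vtx s).

Definition is_module_in (W M : V -> Prop) : Prop :=
  (forall x, M x -> W x) /\
  (forall x y v, M x -> M y -> W v -> ~ M v ->
     eqv s x v y v /\ eqv s v x v y).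

Definition prime_in (W : V -> Prop) : Prop :=
  (exists a b c, W a /\ W b /\ W c /\ a <> b /\ a <> c /\ b <> c) /\
  (forall M, is_module_in W M ->
     (forall x, ~ M x) \/ (forall x, W x -> M x) \/
     (exists a, forall x, M x <-> x = a)).

Definition setU (A B : V -> Prop) : V -> Prop := fun v => A v \/ B v.

Definition card5 (Y : V -> Prop) : Prop :=
  exists f : nat -> V,
    (forall i j, i < 5 -> j < 5 -> f i = f j -> i = j) /\
    (forall v, Y v <-> exists i, i < 5 /\ v = f i).

Definition S5 (X : V -> Prop) : Prop :=
  ~ exists Y : V -> Prop,
      (forall y, Y y -> ~ X y) /\ card5 Y /\ prime_in (setU X Y).

Definition outside_edge (X : V -> Prop) (x y : V) : Prop :=
  ~ X x /\ ~ X y /\ x <> y /\ prime_in (fun v => X v \/ v = x \/ v = y).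

Definition is_component (X : V -> Prop) (C : V -> Prop) : Prop :=
  exists x0, ~ X x0 /\
    forall v, C v <-> clos_refl_trans V (outside_edge X) x0 v.

End TwoStruct.

Definition induced_P5 {V : Type} (E : V -> V -> Prop) (C : V -> Prop) : Prop :=
  exists f : nat -> V,
    (forall i, i < 5 -> C (f i)) /\
    (forall i j, i < 5 -> j < 5 -> f i = f j -> i = j) /\
    (forall i j, i < 5 -> j < 5 -> (E (f i) (f j) <-> (i = S j \/ j = S i))).

(* Main.v *)
Require Import Defs.
From Stdlib Require Import Relations Arith Lia Classical ClassicalEpsilon.

Lemma prime_in_ext (s : two_structure) (W W' : vtx s -> Prop) :
  (forall v, W v <-> W' v) -> prime_in s W -> prime_in s W'.
Proof.
  intros HW [[a [b [c [Ha [Hb [Hc [Hab [Hac Hbc]]]]]]]] Hm].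
  split.
  - exists a, b, c. repeat split; try apply HW; auto.
  - intros M [HM1 HM2].
    destruct (Hm M) as [H|[H|H]].
    + split; [intros x Mx; apply HW; auto|].
      intros x y v Mx My Wv Nv. apply HM2; auto. apply HW; auto.
    + left; auto.
    + right; left. intros x Wx. apply H, HW; auto.
    + right; right; auto.
Qed.

Lemma module_restr (s : two_structure) (W W' M : vtx s -> Prop) :
  is_module_in s W M -> (forall x, W' x -> W x) ->
  is_module_in s W' (fun x => M x /\ W' x).
Proof.
  intros [H1 H2] HW. split.
  - intros x [_ Hx]; auto.
  - intros x y v [Mx _] [My _] Wv Nv.
    apply H2; auto; intro Mv; apply Nv; auto.
Qed.

Lemma twin (s : two_structure) (U : vtx s -> Prop) (a b : vtx s) :
  a <> b -> ~ U a -> ~ U b ->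
  (forall v, U v -> eqv s a v b v /\ eqv s v a v b) ->
  prime_in s (fun v => U v \/ v = a) -> prime_in s (fun v => U v \/ v = b).
Proof.
  intros Hab Ua Ub Htw [[a1 [b1 [c1 [Ha1 [Hb1 [Hc1 [H12 [H13 H23]]]]]]]] Hm].
  set (phi := fun z => if excluded_middle_informative (z = a) then b else z).
  assert (Pa : phi a = b).
  { unfold phi; destruct (excluded_middle_informative (a = a)); congruence. }
  assert (Pz : forall z, z <> a -> phi z = z).
  { intros z Hz; unfold phi; destruct (excluded_middle_informative (z = a)); congruence. }
  clearbody phi.
  assert (Pmap : forall z, U z \/ z = a -> U (phi z) \/ phi z = b).
  { intros z [Hz|Hz]. - left. rewrite Pz; auto. intro; subst; auto.
    - right; subst; auto. }
  assert (Pinj : forall z w, U z \/ z = a -> U w \/ w = a -> phi z = phi w -> z = w).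
  { intros z w Hz Hw E.
    destruct (classic (z = a)) as [Eza|Eza]; destruct (classic (w = a)) as [Ewa|Ewa];
      try congruence.
    - subst z. rewrite Pa, Pz in E by auto. subst w. destruct Hw; congruence.
    - subst w. rewrite Pa, (Pz z) in E by auto. subst z. destruct Hz; congruence.
    - rewrite !Pz in E; auto. }
  assert (Psurj : forall w, U w \/ w = b -> exists z, (U z \/ z = a) /\ phi z = w).
  { intros w [Hw|Hw].
    - exists w. split; auto. apply Pz. intro; subst; auto.
    - exists a. split; auto. congruence. }
  assert (T : forall z w, U z \/ z = a -> U w \/ w = a -> z <> w ->
            eqv s z w (phi z) (phi w)).
  { intros z w Hz Hw Hzw.
    destruct (classic (z = a)) as [Eza|Eza].
    - subst z. rewrite Pa, Pz by auto. destruct Hw as [Hw|Hw]; [|congruence].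
      apply Htw; auto.
    - rewrite (Pz z) by auto.
      destruct (classic (w = a)) as [Ewa|Ewa].
      + subst w. rewrite Pa. destruct Hz as [Hz|Hz]; [|congruence]. apply Htw; auto.
      + rewrite Pz by auto. apply eqv_refl; auto. }
  split.
  - exists (phi a1), (phi b1), (phi c1).
    repeat split; try apply Pmap; auto;
      intro E; apply Pinj in E; auto.
  - intros N [HN1 HN2].
    set (N' := fun x => (U x \/ x = a) /\ N (phi x)).
    assert (HN' : is_module_in s (fun v => U v \/ v = a) N').
    { split. - intros x [Hx _]; auto.
      - intros x y v [Wx Nx] [Wy Ny] Wv Nv.
        assert (Nv' : ~ N (phi v)) by (intro; apply Nv; split; auto).
        assert (xv : x <> v) by (intro; subst; apply Nv; split; auto).
        assert (yv : y <> v) by (intro; subst; apply Nv; split; auto).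
        assert (pxv : phi x <> phi v) by (intro E; apply Pinj in E; auto).
        assert (pyv : phi y <> phi v) by (intro E; apply Pinj in E; auto).
        destruct (HN2 (phi x) (phi y) (phi v) Nx Ny (Pmap v Wv) Nv') as [E1 E2].
        split.
        + assert (T1 : eqv s x v (phi x) (phi v)) by (apply T; auto).
          assert (T2 : eqv s y v (phi y) (phi v)) by (apply T; auto).
          apply eqv_trans with (phi x) (phi v); auto.
          apply eqv_trans with (phi y) (phi v); auto.
          apply eqv_sym; auto.
        + assert (T1 : eqv s v x (phi v) (phi x)) by (apply T; auto).
          assert (T2 : eqv s v y (phi v) (phi y)) by (apply T; auto).
          apply eqv_trans with (phi v) (phi x); auto.
          apply eqv_trans with (phi v) (phi y); auto.
          apply eqv_sym; auto. }
    destruct (Hm N' HN') as [H|[H|[c H]]].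
    + left. intros w Nw. destruct (Psurj w (HN1 w Nw)) as [z [Hz Ez]].
      apply (H z). split; auto. congruence.
    + right; left. intros w Ww. destruct (Psurj w Ww) as [z [Hz Ez]].
      destruct (H z Hz). congruence.
    + right; right. exists (phi c). intro w. split.
      * intros Nw. destruct (Psurj w (HN1 w Nw)) as [z [Hz Ez]].
        assert (N' z) by (split; auto; congruence).
        apply H in H0. congruence.
      * intros ->. assert (N' c) by (apply H; auto). destruct H0; auto.
Qed.

Definition adj (j i : nat) : Prop := i = S j \/ j = S i.

Lemma p5_dist (i k : nat) : i < 5 -> k < 5 -> i <> k ->
  exists j, j < 5 /\ ((adj j i /\ ~ adj j k) \/ (adj j k /\ ~ adj j i)).
Proof.
  unfold adj; intros Hi Hk Hik.
  destruct i as [|[|[|[|[|i]]]]]; destruct k as [|[|[|[|[|k]]]]]; try lia;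
  first [exists 0; lia | exists 1; lia | exists 2; lia | exists 3; lia | exists 4; lia].
Qed.

Lemma p5_nb (i : nat) : i < 5 -> exists j, j < 5 /\ adj i j.
Proof.
  unfold adj; intros Hi.
  destruct i as [|[|[|[|[|i]]]]]; try lia;
  first [exists 0; lia | exists 1; lia | exists 2; lia | exists 3; lia | exists 4; lia].
Qed.

Theorem lemma4p4 (s : two_structure) (X : vtx s -> Prop) :
  (exists v, ~ X v) ->
  prime_in s X ->
  S5 s X ->
  forall C : vtx s -> Prop, is_component s X C ->
    ~ induced_P5 (outside_edge s X) C.
Proof.
  intros _ HX HS5 C _ [f [_ [Finj Fe]]].
  destruct HX as [[a1 [b1 [c1 [Ha1 [Hb1 [Hc1 [H12 [H13 H23]]]]]]]] HXm].
  set (Y := fun v => exists i, i < 5 /\ v = f i).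
  assert (Edge : forall i j, i < 5 -> j < 5 -> adj i j -> outside_edge s X (f i) (f j)).
  { intros i j Hi Hj Ha. apply Fe; auto. unfold adj in Ha. lia. }
  assert (NX : forall i, i < 5 -> ~ X (f i)).
  { intros i Hi. destruct (p5_nb i Hi) as [j [Hj Ha]].
    destruct (Edge i j Hi Hj Ha) as [H _]. auto. }
  apply HS5. exists Y. split; [|split].
  - intros y [i [Hi ->]]. auto.
  - exists f. split; auto. intro v; tauto.
  - split.
    { exists a1, b1, c1. unfold setU. repeat split; auto. }
    intros M HM.
    assert (HMX := HXm _ (module_restr s _ X M HM (fun x Hx => or_introl Hx))).
    assert (PE : forall i j, i < 5 -> j < 5 -> adj i j ->
      let W2 := fun v => X v \/ v = f i \/ v = f j in
      (forall x, ~ (M x /\ W2 x)) \/ (forall x, W2 x -> M x /\ W2 x) \/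
      (exists c, forall x, M x /\ W2 x <-> x = c)).
    { intros i j Hi Hj Ha W2.
      destruct (Edge i j Hi Hj Ha) as [_ [_ [_ Hp]]].
      destruct Hp as [_ Hm2]. apply Hm2. apply (module_restr s (setU s X Y)); auto.
      intros x [Hx|[->| ->]]; [left; auto| right; exists i; auto | right; exists j; auto]. }
    destruct HMX as [H|[H|[u H]]].
    +
      destruct (classic (exists p, M p)) as [[p Mp]|Hn]; [|left; intros x Mx; apply Hn; eauto].
      destruct (classic (exists q, M q /\ q <> p)) as [[q [Mq Hqp]]|Hn];
        [|right; right; exists p; intro x; split; [|intros ->; auto];
          intro Mx; apply NNPP; intro; apply Hn; eauto].
      exfalso.
      assert (InY : forall z, M z -> exists i, i < 5 /\ z = f i).
      { intros z Mz. destruct (proj1 HM z Mz) as [Xz|Yz]; auto.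
        exfalso; apply (H z); auto. }
      destruct (InY p Mp) as [i [Hi ->]]. destruct (InY q Mq) as [k [Hk ->]].
      assert (Hik : i <> k) by congruence.
      assert (Core : forall i k j, i < 5 -> k < 5 -> j < 5 -> M (f i) -> M (f k) ->
                 i <> k -> adj j i -> ~ adj j k -> False).
      { clear i k Hi Hk Mp Mq Hqp Hik InY.
        intros i k j Hi Hk Hj Mi Mk Hik Aji Ajk.
        assert (Hji : j <> i) by (unfold adj in Aji; lia).
        assert (Mj : ~ M (f j)).
        { intro Mj. destruct (PE j i Hj Hi Aji) as [H2|[H2|[c H2]]].
          - apply (H2 (f j)). split; auto.
          - apply (H a1). split; auto. apply H2; auto.
          - assert (f j = c) by (apply H2; split; auto).
            assert (f i = c) by (apply H2; split; auto).
            apply Hji, Finj; congruence. }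
        assert (Hjk : f j <> f k) by (intro E; rewrite E in Mj; auto).
        assert (Hjk' : f k <> f j) by auto.
        assert (Pr : prime_in s (fun v => (X v \/ v = f j) \/ v = f k)).
        { apply twin with (a := f i).
          - intro E; apply Hik, Finj; auto.
          - intros [Hx|E]; [apply (NX i); auto | apply Hji, Finj; auto].
          - intros [Hx|E]; [apply (NX k); auto | auto].
          - intros v Hv. apply (proj2 HM); auto.
            + destruct Hv as [Hv| ->]; [left; auto| right; exists j; auto].
            + destruct Hv as [Hv| ->]; auto. intro; apply (H v); auto.
          - apply prime_in_ext with (W := fun v => X v \/ v = f j \/ v = f i).
            + intro v; tauto.
            + apply (Edge j i Hj Hi Aji). }
        assert (outside_edge s X (f j) (f k)).
        { split; [apply NX; auto|split; [apply NX; auto|split; auto]].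
          apply prime_in_ext with (2 := Pr). intro v; tauto. }
        apply Ajk. apply (proj1 (Fe j k Hj Hk)) in H0. unfold adj; lia. }
      destruct (p5_dist i k Hi Hk Hik) as [j [Hj [[A1 A2]|[A1 A2]]]].
      * apply (Core i k j); auto.
      * apply (Core k i j); auto.
    +
      right; left. intros x [Xx|[i [Hi ->]]].
      * apply H; auto.
      * destruct (p5_nb i Hi) as [j [Hj Ha]].
        destruct (PE i j Hi Hj Ha) as [H2|[H2|[c H2]]].
        -- exfalso. apply (H2 a1). split; [apply H; auto | left; auto].
        -- apply H2; auto.
        -- exfalso. apply H12.
           transitivity c; [|symmetry]; apply H2; (split; [apply H; auto|left; auto]).
    +
      assert (Mu : M u /\ X u) by (apply H; auto).
      right; right. exists u. intro x; split; [|intros ->; tauto].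
      intros Mx. destruct (proj1 HM x Mx) as [Xx|[i [Hi ->]]].
      * apply H; auto.
      * exfalso. destruct (p5_nb i Hi) as [j [Hj Ha]].
        destruct (PE i j Hi Hj Ha) as [H2|[H2|[c H2]]].
        -- apply (H2 u). split; [tauto|left; tauto].
        -- assert (Ea : a1 = u) by (apply H; split; auto; apply H2; left; auto).
           assert (Eb : b1 = u) by (apply H; split; auto; apply H2; left; auto).
           congruence.
        -- assert (E1 : u = c) by (apply H2; split; [tauto|left; tauto]).
           assert (E2 : f i = c) by (apply H2; split; auto).
           apply (NX i Hi). rewrite E2, <- E1. tauto.
Qed.
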